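(* Let $\mathcal H$ be a Hilbert space and $\mathcal S,\mathcal W,\mathcal A\subseteq\mathcal H$ closed subspaces such that $\mathcal S,\mathcal W,\mathcal A,\mathcal S^\perp,\mathcal W^\perp,\mathcal A^\perp$ are nonzero and $\mathcal A\oplus\mathcal S^\perp=\mathcal H$. Fix $\lambda\in[0,1]$ and let $R_\lambda:=P_{\mathcal W}-\lambda P_{\mathcal W}P_{\mathcal A\mathcal S^\perp}-(1-\lambda)P_{\mathcal W}P_{\mathcal S}$. Then for every $x\in\mathcal A$, $$\|R_\lambda x\|=(1-\lambda)\|P_{\mathcal W}P_{\mathcal S^\perp}x\|$$ and $$(1-\lambda)\cos(\mathcal A,\mathcal S^\perp)\cos(\mathcal W^\perp,\mathcal S)\|x\|\le\|R_\lambda x\|\le(1-\lambda)\sin(\mathcal A,\mathcal S)\sin(\mathcal W,\mathcal S)\|x\|.$$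
   Context: $P_{\mathcal V}$ is the orthogonal projection onto a closed subspace $\mathcal V$, $\mathcal V^\perp$ its orthogonal complement. For closed subspaces with $\mathcal V_1\oplus\mathcal V_2=\mathcal H$, $P_{\mathcal V_1\mathcal V_2}$ is the oblique projection onto $\mathcal V_1$ along $\mathcal V_2$ (identity on $\mathcal V_1$, zero on $\mathcal V_2$). Angles between nonzero closed subspaces: $\cos(\mathcal V_1,\mathcal V_2):=\inf_{0\ne x\in\mathcal V_1}\|P_{\mathcal V_2}x\|/\|x\|$, $\sin(\mathcal V_1,\mathcal V_2):=\sup_{0\ne x\in\mathcal V_1}\|P_{\mathcal V_2^\perp}x\|/\|x\|$. *)

(* Defs.v *)
From Stdlib Require Import Reals Lra ClassicalEpsilon.
Open Scope R_scope.

Record Hilbert := {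
  hcar :> Type;
  hzero : hcar;
  hadd : hcar -> hcar -> hcar;
  hopp : hcar -> hcar;
  hscal : R -> hcar -> hcar;
  hinner : hcar -> hcar -> R;
  hadd_assoc : forall x y z, hadd x (hadd y z) = hadd (hadd x y) z;
  hadd_comm : forall x y, hadd x y = hadd y x;
  hadd_0 : forall x, hadd x hzero = x;
  hadd_opp : forall x, hadd x (hopp x) = hzero;
  hscal_1 : forall x, hscal 1 x = x;
  hscal_assoc : forall a b x, hscal a (hscal b x) = hscal (a * b) x;
  hscal_distr_v : forall a x y, hscal a (hadd x y) = hadd (hscal a x) (hscal a y);
  hscal_distr_s : forall a b x, hscal (a + b) x = hadd (hscal a x) (hscal b x);
  hinner_sym : forall x y, hinner x y = hinner y x;
  hinner_add : forall x y z, hinner (hadd x y) z = hinner x z + hinner y z;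
  hinner_scal : forall a x y, hinner (hscal a x) y = a * hinner x y;
  hinner_pos : forall x, 0 <= hinner x x;
  hinner_def : forall x, hinner x x = 0 -> x = hzero;
  hcomplete : forall u : nat -> hcar,
    (forall eps, 0 < eps -> exists N, forall m n, (N <= m)%nat -> (N <= n)%nat ->
        sqrt (hinner (hadd (u m) (hopp (u n))) (hadd (u m) (hopp (u n)))) < eps) ->
    exists l, forall eps, 0 < eps -> exists N, forall n, (N <= n)%nat ->
        sqrt (hinner (hadd (u n) (hopp l)) (hadd (u n) (hopp l))) < eps
}.

Arguments hzero {h}.
Arguments hadd {h}.
Arguments hopp {h}.
Arguments hscal {h}.
Arguments hinner {h}.

Section Defs.
Variable H : Hilbert.

Definition hsub (x y : H) : H := hadd x (hopp y).

Definition hnorm (x : H) : R := sqrt (hinner x x).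

Definition hconverges (u : nat -> H) (l : H) : Prop :=
  forall eps, 0 < eps -> exists N, forall n, (N <= n)%nat -> hnorm (hsub (u n) l) < eps.

Definition closed_subspace (V : H -> Prop) : Prop :=
  V hzero /\
  (forall x y, V x -> V y -> V (hadd x y)) /\
  (forall a x, V x -> V (hscal a x)) /\
  (forall u l, (forall n, V (u n)) -> hconverges u l -> V l).

Definition nonzero_sub (V : H -> Prop) : Prop := exists x, V x /\ x <> hzero.

Definition ortho (V : H -> Prop) : H -> Prop :=
  fun x => forall v, V v -> hinner x v = 0.

(** Orthogonal projection P_V (well-defined for closed subspaces; defined by
    choice of the unique p in V with x - p orthogonal to V). *)
Definition proj (V : H -> Prop) (x : H) : H :=
  epsilon (inhabits hzero) (fun p => V p /\ ortho V (hsub x p)).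

Definition direct_sum_full (V1 V2 : H -> Prop) : Prop :=
  (forall x, exists v1 v2, V1 v1 /\ V2 v2 /\ x = hadd v1 v2) /\
  (forall x, V1 x -> V2 x -> x = hzero).

Definition oblique_proj (V1 V2 : H -> Prop) (x : H) : H :=
  epsilon (inhabits hzero) (fun p => V1 p /\ V2 (hsub x p)).

Definition is_glb (E : R -> Prop) (m : R) : Prop :=
  (forall y, E y -> m <= y) /\ (forall b, (forall y, E y -> b <= y) -> b <= m).

Definition cos_ang (V1 V2 : H -> Prop) : R :=
  epsilon (inhabits 0) (is_glb (fun r => exists x, V1 x /\ x <> hzero /\
                                     r = hnorm (proj V2 x) / hnorm x)).

Definition sin_ang (V1 V2 : H -> Prop) : R :=
  epsilon (inhabits 0) (is_lub (fun r => exists x, V1 x /\ x <> hzero /\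
                                     r = hnorm (proj (ortho V2) x) / hnorm x)).

Definition R_lam (S W A : H -> Prop) (lam : R) (x : H) : H :=
  hsub (hsub (proj W x) (hscal lam (proj W (oblique_proj A (ortho S) x))))
       (hscal (1 - lam) (proj W (proj S x))).

End Defs.

Arguments hsub {H}.
Arguments hnorm {H}.
Arguments closed_subspace {H}.
Arguments nonzero_sub {H}.
Arguments ortho {H}.
Arguments proj {H}.
Arguments direct_sum_full {H}.
Arguments oblique_proj {H}.
Arguments cos_ang {H}.
Arguments sin_ang {H}.
Arguments R_lam {H}.

(* Main.v *)
Require Import Defs.
From Stdlib Require Import Reals Lra Psatz Lia ZArith Classical ClassicalEpsilon.
Open Scope R_scope.

Lemma inner_zero_l {H : Hilbert} (y : H) : hinner hzero y = 0.
Proof.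
  pose proof (hinner_add H hzero hzero y) as E. rewrite hadd_0 in E. lra.
Qed.

Lemma inner_opp_l {H : Hilbert} (x y : H) : hinner (hopp x) y = - hinner x y.
Proof.
  pose proof (hinner_add H x (hopp x) y) as E. rewrite hadd_opp, inner_zero_l in E. lra.
Qed.

Ltac expl := unfold hsub; repeat (rewrite ?hinner_add, ?hinner_scal, ?inner_opp_l, ?inner_zero_l).

Lemma inner_add_r {H : Hilbert} (x y z : H) : hinner z (hadd x y) = hinner z x + hinner z y.
Proof. rewrite !(hinner_sym H z). apply hinner_add. Qed.
Lemma inner_scal_r {H : Hilbert} a (x y : H) : hinner y (hscal a x) = a * hinner y x.
Proof. rewrite !(hinner_sym H y). apply hinner_scal. Qed.
Lemma inner_opp_r {H : Hilbert} (x y : H) : hinner y (hopp x) = - hinner y x.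
Proof. rewrite !(hinner_sym H y). apply inner_opp_l. Qed.
Lemma inner_zero_r {H : Hilbert} (y : H) : hinner y hzero = 0.
Proof. rewrite hinner_sym. apply inner_zero_l. Qed.

Ltac expr := unfold hsub; repeat (rewrite ?inner_add_r, ?inner_scal_r, ?inner_opp_r, ?inner_zero_r).
Ltac expa := expl; expr.

Lemma ext_eq {H : Hilbert} (u v : H) : (forall z, hinner u z = hinner v z) -> u = v.
Proof.
  intros E. assert (hinner (hsub u v) (hsub u v) = 0) as Z.
  { expl. rewrite E. ring. }
  apply hinner_def in Z. unfold hsub in Z.
  rewrite <- (hadd_0 H u), <- (hadd_opp H v), (hadd_comm H v), hadd_assoc, Z,
     hadd_comm, hadd_0. reflexivity.
Qed.

Ltac veq := apply ext_eq; intro; expl; ring.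

Lemma CS_sq {H : Hilbert} (x y : H) : (hinner x y)^2 <= hinner x x * hinner y y.
Proof.
  destruct (Req_dec (hinner y y) 0) as [E|E].
  - apply hinner_def in E. subst. rewrite !inner_zero_r. ring_simplify. lra.
  - pose proof (hinner_pos H y).
    set (c := hinner y y) in *. set (b := hinner x y). set (a := hinner x x).
    assert (P : 0 <= hinner (hadd x (hscal (-b/c) y)) (hadd x (hscal (-b/c) y))) by apply hinner_pos.
    assert (Q : hinner (hadd x (hscal (-b/c) y)) (hadd x (hscal (-b/c) y)) = a + 2*(-b/c)*b + (-b/c)*(-b/c)*c).
    { expa. rewrite (hinner_sym H y x). fold a b c. ring. }
    rewrite Q in P. clear Q.
    assert (0 < c) by lra.
    assert (P2 : 0 <= c * (a + 2*(-b/c)*b + (-b/c)*(-b/c)*c)) by (apply Rmult_le_pos; lra).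
    replace (c * (a + 2*(-b/c)*b + (-b/c)*(-b/c)*c)) with (c*a - b*b) in P2 by (field; lra).
    nra.
Qed.

Lemma hnorm_sq {H : Hilbert} (x : H) : hnorm x * hnorm x = hinner x x.
Proof. unfold hnorm. apply sqrt_sqrt, hinner_pos. Qed.
Lemma hnorm_pos {H : Hilbert} (x : H) : 0 <= hnorm x.
Proof. apply sqrt_pos. Qed.

Lemma CS_abs {H : Hilbert} (x y : H) : Rabs (hinner x y) <= hnorm x * hnorm y.
Proof.
  unfold hnorm. rewrite <- sqrt_mult by apply hinner_pos.
  rewrite <- sqrt_Rsqr_abs. apply sqrt_le_1_alt. unfold Rsqr.
  pose proof (CS_sq x y). lra.
Qed.

Lemma hnorm_scal {H : Hilbert} a (x : H) : hnorm (hscal a x) = Rabs a * hnorm x.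
Proof.
  unfold hnorm. rewrite hinner_scal, inner_scal_r, <- Rmult_assoc.
  rewrite sqrt_mult. 2: nra. 2: apply hinner_pos.
  f_equal. rewrite <- sqrt_Rsqr_abs. reflexivity.
Qed.

Lemma pyth {H : Hilbert} (a p : H) : hinner (hsub a p) p = 0 ->
  hinner a a = hinner (hsub a p) (hsub a p) + hinner p p.
Proof.
  intros E. assert (E2: hinner a p - hinner p p = 0) by (rewrite <- E; expl; ring).
  expa. rewrite (hinner_sym H p a). lra.
Qed.


Lemma cs_sub {H : Hilbert} (V : H -> Prop) (hV : closed_subspace V) p q :
  V p -> V q -> V (hsub p q).
Proof.
  destruct hV as (h0 & hadd' & hsc & _). intros Hp Hq.
  replace (hsub p q) with (hadd p (hscal (-1) q)) by veq. auto.
Qed.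

Lemma sqrt_lt_eps (a eps : R) : 0 <= a -> 0 < eps -> a < eps * eps -> sqrt a < eps.
Proof.
  intros. rewrite <- (sqrt_square eps) by lra. apply sqrt_lt_1_alt. lra.
Qed.

Lemma proj_exists {H : Hilbert} (V : H -> Prop) (hV : closed_subspace V) (x : H) :
  exists p, V p /\ ortho V (hsub x p).
Proof.
  pose proof hV as (h0 & hadd' & hsc & hcl).
  set (E' := fun r => exists v, V v /\ - r = hinner (hsub x v) (hsub x v)).
  assert (Eb : bound E').
  { exists 0. intros r (v & _ & Hr). pose proof (hinner_pos H (hsub x v)). lra. }
  assert (Ene : exists r, E' r).
  { exists (- hinner (hsub x hzero) (hsub x hzero)). exists hzero. split; auto. lra. }
  destruct (completeness E' Eb Ene) as [m [Mub Mlub]].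
  set (d := - m).
  assert (Dlow : forall v, V v -> d <= hinner (hsub x v) (hsub x v)).
  { intros v Hv. assert (E' (- hinner (hsub x v) (hsub x v))) as T.
    { exists v. split; auto. lra. }
    apply Mub in T. unfold d. lra. }
  assert (Dapp : forall eps, 0 < eps -> exists v, V v /\ hinner (hsub x v) (hsub x v) < d + eps).
  { intros eps He. apply NNPP. intro N.
    assert (m <= - (d + eps)); [|unfold d in *; lra].
    apply Mlub. intros r (v & Hv & Hr).
    assert (~ hinner (hsub x v) (hsub x v) < d + eps) by (intro; apply N; eauto). lra. }
  assert (Seq : forall n : nat, exists v, V v /\ hinner (hsub x v) (hsub x v) < d + / (INR n + 1)).
  { intro n. apply Dapp. apply Rinv_0_lt_compat. pose proof (pos_INR n). lra. }
  set (u := fun n => proj1_sig (constructive_indefinite_description _ (Seq n))).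
  assert (Hu : forall n, V (u n) /\ hinner (hsub x (u n)) (hsub x (u n)) < d + / (INR n + 1)).
  { intro n. unfold u. destruct (constructive_indefinite_description _ (Seq n)). exact a. }
  assert (Par : forall n m, hinner (hsub (u n) (u m)) (hsub (u n) (u m)) <= 2 * / (INR n + 1) + 2 * / (INR m + 1)).
  { intros n m0.
    set (mid := hscal (1/2) (hadd (u n) (u m0))).
    assert (Vm : V mid) by (apply hsc, hadd'; apply Hu).
    pose proof (Dlow mid Vm) as Dm.
    assert (PI : hinner (hsub (u n) (u m0)) (hsub (u n) (u m0)) =
       2 * hinner (hsub x (u n)) (hsub x (u n)) + 2 * hinner (hsub x (u m0)) (hsub x (u m0))
       - 4 * hinner (hsub x mid) (hsub x mid)).
    { unfold mid. expa. rewrite (hinner_sym H (u n) x), (hinner_sym H (u m0) x), (hinner_sym H (u m0) (u n)). field. }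
    rewrite PI. pose proof (proj2 (Hu n)). pose proof (proj2 (Hu m0)). lra. }
  assert (Cau : forall eps, 0 < eps -> exists N, forall m n, (N <= m)%nat -> (N <= n)%nat ->
        sqrt (hinner (hadd (u m) (hopp (u n))) (hadd (u m) (hopp (u n)))) < eps).
  { intros eps He.
    destruct (archimed (4 / (eps * eps))) as [Ha _].
    assert (0 < eps * eps) by nra.
    assert (0 <= IZR (up (4 / (eps * eps)))).
    { assert (0 < 4 / (eps*eps)) by (apply Rdiv_lt_0_compat; lra). lra. }
    exists (Z.to_nat (up (4 / (eps * eps)))). intros m0 n Hm Hn.
    apply sqrt_lt_eps; auto. apply hinner_pos.
    change (hadd (u m0) (hopp (u n))) with (hsub (u m0) (u n)).
    eapply Rle_lt_trans. apply Par.
    set (K := Z.to_nat (up (4 / (eps * eps)))) in *.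
    assert (IK : INR K = IZR (up (4 / (eps * eps)))).
    { unfold K. rewrite INR_IZR_INZ, Z2Nat.id; auto. apply le_IZR. lra. }
    apply le_INR in Hm. apply le_INR in Hn.
    assert (/ (INR m0 + 1) <= / (INR K + 1)) by (apply Rinv_le_contravar; pose proof (pos_INR K); lra).
    assert (/ (INR n + 1) <= / (INR K + 1)) by (apply Rinv_le_contravar; pose proof (pos_INR K); lra).
    assert (4 * / (INR K + 1) < eps * eps).
    { assert (4 / (eps * eps) < INR K + 1) by lra.
      apply (Rmult_lt_reg_r (INR K + 1)). pose proof (pos_INR K); lra.
      rewrite Rmult_assoc, Rinv_l by (pose proof (pos_INR K); lra).
      apply (Rmult_lt_reg_l (/ (eps*eps))). apply Rinv_0_lt_compat; lra.
      replace (/ (eps * eps) * (4 * 1)) with (4 / (eps*eps)) by (field; lra).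
      replace (/ (eps * eps) * (eps * eps * (INR K + 1))) with (INR K + 1) by (field; lra). lra. }
    lra. }
  destruct (hcomplete H u Cau) as [p Hp].
  assert (Vp : V p) by (apply (hcl u p); [intro; apply Hu | exact Hp]).
  exists p. split; auto.
  intros v Hv.
  set (e := hinner (hsub x p) v).
  destruct (Req_dec (hinner v v) 0) as [Z|Z].
  { apply hinner_def in Z. subst v. apply inner_zero_r. }
  pose proof (hinner_pos H v). set (c := hinner v v) in *.
  assert (Cp : 0 < c) by lra.
  set (t := e / c).
  assert (Key : forall eps, 0 < eps -> e * e / c <= eps).
  { intros eps He.
    assert (Hv1 : 0 <= 2 * Rabs t * hnorm v) by (pose proof (Rabs_pos t); pose proof (hnorm_pos v); nra).
    destruct (Hp (eps / 2 / (2 * Rabs t * hnorm v + 1))) as [N1 HN1].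
    { apply Rdiv_lt_0_compat; lra. }
    destruct (archimed (2 / eps)) as [Ha _].
    assert (0 < 2 / eps) by (apply Rdiv_lt_0_compat; lra).
    set (N2 := Z.to_nat (up (2 / eps))).
    assert (IK : INR N2 = IZR (up (2 / eps))).
    { unfold N2. rewrite INR_IZR_INZ, Z2Nat.id; auto. apply le_IZR. lra. }
    set (n := (N1 + N2)%nat).
    specialize (HN1 n ltac:(unfold n; lia)).
    assert (In : / (INR n + 1) < eps / 2).
    { assert (INR N2 <= INR n) by (apply le_INR; unfold n; lia).
      assert (2 / eps < INR n + 1) by lra.
      apply (Rmult_lt_reg_r (INR n + 1)). pose proof (pos_INR n); lra.
      rewrite Rinv_l by (pose proof (pos_INR n); lra).
      apply (Rmult_lt_reg_l (2 / eps)). lra.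
      replace (2 / eps * 1) with (2/eps) by ring.
      replace (2 / eps * (eps / 2 * (INR n + 1))) with (INR n + 1) by (field; lra). lra. }
    destruct (Hu n) as [Vn Dn].
    assert (Vt : V (hadd (u n) (hscal t v))) by auto.
    pose proof (Dlow _ Vt) as Dt.
    assert (Ex : hinner (hsub x (hadd (u n) (hscal t v))) (hsub x (hadd (u n) (hscal t v)))
       = hinner (hsub x (u n)) (hsub x (u n)) - 2 * t * hinner (hsub x (u n)) v + t * t * c).
    { unfold c. expa. rewrite (hinner_sym H (u n) x), (hinner_sym H v x), (hinner_sym H v (u n)). ring. }
    assert (Sp : hinner (hsub x (u n)) v = e - hinner (hsub (u n) p) v) by (unfold e; expl; ring).
    pose proof (CS_abs (hsub (u n) p) v) as CS.
    fold (hnorm (hsub (u n) p)) in HN1.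
    pose proof (hnorm_pos (hsub (u n) p)).
    assert (T1 : Rabs (2 * t * hinner (hsub (u n) p) v) <= 2 * Rabs t * (hnorm (hsub (u n) p) * hnorm v)).
    { rewrite !Rabs_mult. rewrite (Rabs_right 2) by lra. pose proof (Rabs_pos t). pose proof (Rabs_pos (hinner (hsub (u n) p) v)). nra. }
    assert (T2 : 2 * Rabs t * (hnorm (hsub (u n) p) * hnorm v) <= eps / 2).
    { assert (hnorm (hsub (u n) p) * (2 * Rabs t * hnorm v + 1) <= eps / 2).
      { apply Rlt_le. apply (Rmult_lt_reg_r (/ (2 * Rabs t * hnorm v + 1))).
        apply Rinv_0_lt_compat; lra.
        rewrite Rmult_assoc, Rinv_r, Rmult_1_r by lra. exact HN1. }
      nra. }
    assert (Tq : 2 * t * e <= eps + t * t * c).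
    { pose proof (Rle_abs (2 * t * hinner (hsub (u n) p) v)) as RA. rewrite Ex, Sp in Dt. lra. }
    unfold t in Tq.
    replace (2 * (e / c) * e) with (2 * (e * e / c)) in Tq by (field; lra).
    replace (e / c * (e / c) * c) with (e * e / c) in Tq by (field; lra). lra. }
  assert (e * e / c <= 0).
  { apply Rnot_lt_le. intro Hl. specialize (Key _ (Rmult_lt_0_compat _ _ Hl (ltac:(lra) : 0 < /2))). lra. }
  assert (0 <= e * e / c) by (apply Rmult_le_pos; [nra | apply Rlt_le, Rinv_0_lt_compat; lra]).
  assert (e * e = 0).
  { assert (e * e / c = 0) by lra. apply (Rmult_eq_reg_r (/ c)). rewrite Rmult_0_l. exact H3. apply Rinv_neq_0_compat. lra. }
  nra.
Qed.


Lemma proj_spec {H : Hilbert} (V : H -> Prop) (hV : closed_subspace V) x :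
  V (proj V x) /\ ortho V (hsub x (proj V x)).
Proof. unfold proj. apply epsilon_spec. apply proj_exists; auto. Qed.

Lemma uniq_gen {H : Hilbert} (V : H -> Prop) (Vsub : forall p q, V p -> V q -> V (hsub p q)) x p q :
  V p -> ortho V (hsub x p) -> V q -> ortho V (hsub x q) -> p = q.
Proof.
  intros Vp Op Vq Oq. assert (Vw : V (hsub p q)) by auto.
  assert (Z : hinner (hsub p q) (hsub p q) = 0).
  { pose proof (Op _ Vw). pose proof (Oq _ Vw). 
    assert (hinner (hsub p q) (hsub p q) = hinner (hsub x q) (hsub p q) - hinner (hsub x p) (hsub p q)) as ->.
    { unfold hsub at 1 3 5. expl. ring. }
    lra. }
  apply hinner_def in Z. apply ext_eq. intro z.
  assert (hinner (hsub p q) z = 0) by (rewrite Z; apply inner_zero_l).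
  revert H0. expl. lra.
Qed.

Lemma proj_eq {H : Hilbert} (V : H -> Prop) (hV : closed_subspace V) x p :
  V p -> ortho V (hsub x p) -> proj V x = p.
Proof.
  intros. destruct (proj_spec V hV x). eapply uniq_gen; eauto. apply cs_sub; auto.
Qed.

Lemma ortho_sub {H : Hilbert} (V : H -> Prop) p q : ortho V p -> ortho V q -> ortho V (hsub p q).
Proof. intros Op Oq v Hv. specialize (Op v Hv). specialize (Oq v Hv). expl. lra. Qed.

Lemma proj_ortho {H : Hilbert} (S : H -> Prop) (hS : closed_subspace S) x :
  proj (ortho S) x = hsub x (proj S x).
Proof.
  destruct (proj_spec S hS x) as [Sp Op].
  assert (G : ortho S (hsub x (proj S x)) /\ ortho (ortho S) (hsub x (hsub x (proj S x)))).
  { split; auto. intros v Hv. specialize (Hv _ Sp).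
    assert (hinner (hsub x (hsub x (proj S x))) v = hinner v (proj S x)).
    { rewrite (hinner_sym H v). expl. ring. }
    lra. }
  assert (G' : ortho S (proj (ortho S) x) /\ ortho (ortho S) (hsub x (proj (ortho S) x))).
  { unfold proj at 1 2. apply (epsilon_spec (inhabits hzero) (fun p => ortho S p /\ ortho (ortho S) (hsub x p))). eexists; exact G. }
  destruct G as [G1 G2]. destruct G' as [G3 G4].
  eapply uniq_gen; eauto. intros; apply ortho_sub; auto.
Qed.

Lemma proj_sub {H : Hilbert} (W : H -> Prop) (hW : closed_subspace W) a b :
  proj W (hsub a b) = hsub (proj W a) (proj W b).
Proof.
  destruct (proj_spec W hW a) as [Wa Oa]. destruct (proj_spec W hW b) as [Wb Ob].
  apply proj_eq; auto. apply cs_sub; auto.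
  intros v Hv. specialize (Oa v Hv). specialize (Ob v Hv). revert Oa Ob. expl. lra.
Qed.

Lemma obl_id {H : Hilbert} (S A : H -> Prop) (hA : closed_subspace A)
  (hAS : direct_sum_full A (ortho S)) x : A x -> oblique_proj A (ortho S) x = x.
Proof.
  intros Ax. unfold oblique_proj.
  assert (G : A x /\ ortho S (hsub x x)).
  { split; auto. intros v _. expl. ring. }
  assert (G' : A (epsilon (inhabits hzero) (fun p => A p /\ ortho S (hsub x p))) /\
     ortho S (hsub x (epsilon (inhabits hzero) (fun p => A p /\ ortho S (hsub x p))))).
  { apply (epsilon_spec (inhabits hzero) (fun p => A p /\ ortho S (hsub x p))). eexists; exact G. }
  destruct G' as [G1 G2].
  assert (Z : hsub x (epsilon (inhabits hzero) (fun p => A p /\ ortho S (hsub x p))) = hzero).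
  { apply (proj2 hAS). apply cs_sub; auto. auto. }
  symmetry. apply ext_eq. intro z.
  assert (hinner (hsub x (epsilon (inhabits hzero) (fun p => A p /\ ortho S (hsub x p)))) z = 0)
    by (rewrite Z; apply inner_zero_l).
  revert H0. expl. lra.
Qed.

Lemma hnorm_le {H : Hilbert} (a b : H) : hinner a a <= hinner b b -> hnorm a <= hnorm b.
Proof. intros. apply sqrt_le_1_alt. auto. Qed.

Lemma proj_norm_le {H : Hilbert} (V : H -> Prop) (hV : closed_subspace V) a :
  hnorm (proj V a) <= hnorm a /\ hnorm (hsub a (proj V a)) <= hnorm a.
Proof.
  destruct (proj_spec V hV a) as [Vp Op].
  pose proof (pyth a (proj V a) (Op _ Vp)).
  pose proof (hinner_pos H (proj V a)). pose proof (hinner_pos H (hsub a (proj V a))).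
  split; apply hnorm_le; lra.
Qed.

Lemma hnorm_gt0 {H : Hilbert} (x : H) : x <> hzero -> 0 < hnorm x.
Proof.
  intros Nx. unfold hnorm. apply sqrt_lt_R0. pose proof (hinner_pos H x).
  destruct (Req_dec (hinner x x) 0) as [E|E]; [apply hinner_def in E; contradiction | lra].
Qed.

Definition ratio_set {H : Hilbert} (V1 : H -> Prop) (f : H -> H) :=
  fun r => exists x, V1 x /\ x <> hzero /\ r = hnorm (f x) / hnorm x.

Lemma ratio_bounds {H : Hilbert} (V1 : H -> Prop) (f : H -> H)
  (hf : forall x, hnorm (f x) <= hnorm x) r : ratio_set V1 f r -> 0 <= r <= 1.
Proof.
  intros (x & _ & Nx & ->). pose proof (hnorm_gt0 x Nx). pose proof (hf x).
  pose proof (hnorm_pos (f x)). split.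
  - apply Rmult_le_pos; auto. apply Rlt_le, Rinv_0_lt_compat; auto.
  - apply (Rmult_le_reg_r (hnorm x)); auto. unfold Rdiv. rewrite Rmult_assoc, Rinv_l; lra.
Qed.

Lemma ratio_ne {H : Hilbert} (V1 : H -> Prop) f : nonzero_sub V1 -> exists r, ratio_set V1 f r.
Proof. intros (x & Vx & Nx). eexists. exists x. eauto. Qed.

Lemma lub_ex {H : Hilbert} (V1 : H -> Prop) f (hf : forall x, hnorm (f x) <= hnorm x) :
  nonzero_sub V1 -> exists s, is_lub (ratio_set V1 f) s.
Proof.
  intros N. destruct (completeness (ratio_set V1 f)) as [s Hs].
  - exists 1. intros r Hr. apply (ratio_bounds V1 f hf r Hr).
  - apply ratio_ne; auto.
  - eauto.
Qed.

Lemma lub_ge0 {H : Hilbert} (V1 : H -> Prop) f (hf : forall x, hnorm (f x) <= hnorm x) s :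
  nonzero_sub V1 -> is_lub (ratio_set V1 f) s -> 0 <= s.
Proof.
  intros N [Hs _]. destruct (ratio_ne V1 f N) as [r Hr].
  pose proof (ratio_bounds V1 f hf r Hr). pose proof (Hs r Hr). lra.
Qed.

Lemma glb_ex {H : Hilbert} (V1 : H -> Prop) f (hf : forall x, hnorm (f x) <= hnorm x) :
  nonzero_sub V1 -> exists s, is_glb (ratio_set V1 f) s.
Proof.
  intros N. set (E' := fun r => ratio_set V1 f (- r)).
  destruct (completeness E') as [m [Hm1 Hm2]].
  - exists 0. intros r Hr. pose proof (ratio_bounds V1 f hf _ Hr). lra.
  - destruct (ratio_ne V1 f N) as [r Hr]. exists (- r). unfold E'. rewrite Ropp_involutive. auto.
  - exists (- m). split.
    + intros y Hy. assert (E' (- y)) by (unfold E'; rewrite Ropp_involutive; auto).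
      pose proof (Hm1 _ H0). lra.
    + intros b Hb. assert (m <= - b); [|lra]. apply Hm2. intros r Hr. pose proof (Hb _ Hr). lra.
Qed.

Lemma glb_bounds {H : Hilbert} (V1 : H -> Prop) f (hf : forall x, hnorm (f x) <= hnorm x) s :
  nonzero_sub V1 -> is_glb (ratio_set V1 f) s -> 0 <= s <= 1.
Proof.
  intros N [Hs1 Hs2]. destruct (ratio_ne V1 f N) as [r Hr].
  pose proof (ratio_bounds V1 f hf r Hr). pose proof (Hs1 r Hr). split; [|lra].
  apply Hs2. intros y Hy. apply (ratio_bounds V1 f hf y Hy).
Qed.

Lemma ratio_le (a b c : R) : 0 < b -> c <= a / b -> c * b <= a.
Proof.
  intros Hb Hc. apply (Rmult_le_compat_r b) in Hc; [|lra].
  unfold Rdiv in Hc. rewrite Rmult_assoc, Rinv_l in Hc; lra.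
Qed.


Lemma sin_spec {H : Hilbert} (V1 V2 : H -> Prop)
  (hf : forall x, hnorm (proj (ortho V2) x) <= hnorm x) :
  nonzero_sub V1 -> is_lub (ratio_set V1 (proj (ortho V2))) (sin_ang V1 V2).
Proof.
  intros N. unfold sin_ang.
  exact (epsilon_spec (inhabits 0) (is_lub (ratio_set V1 (proj (ortho V2)))) (lub_ex V1 _ hf N)).
Qed.

Lemma cos_spec {H : Hilbert} (V1 V2 : H -> Prop)
  (hf : forall x, hnorm (proj V2 x) <= hnorm x) :
  nonzero_sub V1 -> is_glb (ratio_set V1 (proj V2)) (cos_ang V1 V2).
Proof.
  intros N. unfold cos_ang.
  exact (epsilon_spec (inhabits 0) (is_glb (ratio_set V1 (proj V2))) (glb_ex V1 _ hf N)).
Qed.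

Lemma ratio_ge (a b c : R) : 0 < b -> a / b <= c -> a <= c * b.
Proof.
  intros Hb Hc. apply (Rmult_le_compat_r b) in Hc; [|lra].
  unfold Rdiv in Hc. rewrite Rmult_assoc, Rinv_l in Hc; lra.
Qed.

Lemma hnorm_zero {H : Hilbert} : hnorm (@hzero H) = 0.
Proof. unfold hnorm. rewrite inner_zero_l. apply sqrt_0. Qed.

Theorem mainTheorem10 (H : Hilbert) (S W A : H -> Prop)
  (hS : closed_subspace S) (hW : closed_subspace W) (hA : closed_subspace A)
  (nS : nonzero_sub S) (nW : nonzero_sub W) (nA : nonzero_sub A)
  (nSp : nonzero_sub (ortho S)) (nWp : nonzero_sub (ortho W))
  (nAp : nonzero_sub (ortho A))
  (hAS : direct_sum_full A (ortho S))
  (lam : R) (hlam : 0 <= lam <= 1) :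
  forall x : H, A x ->
    hnorm (R_lam S W A lam x) = (1 - lam) * hnorm (proj W (proj (ortho S) x)) /\
    (1 - lam) * cos_ang A (ortho S) * cos_ang (ortho W) S * hnorm x
      <= hnorm (R_lam S W A lam x) /\
    hnorm (R_lam S W A lam x)
      <= (1 - lam) * sin_ang A S * sin_ang W S * hnorm x.
Proof.
  intros x Ax.
  set (y := hsub x (proj S x)).
  assert (Hy : proj (ortho S) x = y) by (apply proj_ortho; auto).
  destruct (proj_spec S hS x) as [_ Oy]. fold y in Oy.
  set (w := proj W y).
  destruct (proj_spec W hW y) as [Ww Ow]. fold w in Ww, Ow.
  assert (KeyR : R_lam S W A lam x = hscal (1 - lam) w).
  { unfold R_lam. rewrite obl_id by auto. unfold w, y. rewrite proj_sub by auto. veq. }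
  assert (Nrm : hnorm (R_lam S W A lam x) = (1 - lam) * hnorm w).
  { rewrite KeyR, hnorm_scal, Rabs_right by lra. reflexivity. }
  rewrite Hy. fold w. rewrite Nrm.
  assert (hfoS : forall a, hnorm (proj (ortho S) a) <= hnorm a).
  { intro a. rewrite proj_ortho by auto. apply proj_norm_le; auto. }
  assert (hfS : forall a, hnorm (proj S a) <= hnorm a) by (intro a; apply proj_norm_le; auto).
  pose proof (hnorm_pos x). pose proof (hnorm_pos y). pose proof (hnorm_pos w).
  assert (Yx : hnorm y <= hnorm x) by (apply proj_norm_le; auto).
  split; [reflexivity|split].
  -
    pose proof (cos_spec A (ortho S) hfoS nA) as C1.
    pose proof (glb_bounds A _ hfoS _ nA C1) as C1b.
    pose proof (cos_spec (ortho W) S hfS nWp) as C2.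
    pose proof (glb_bounds (ortho W) _ hfS _ nWp C2) as C2b.
    set (c1 := cos_ang A (ortho S)) in *. set (c2 := cos_ang (ortho W) S) in *.
    assert (L1 : c1 * hnorm x <= hnorm y).
    { destruct (classic (x = hzero)) as [Z|Z].
      - rewrite Z, hnorm_zero. lra.
      - rewrite <- Hy. apply ratio_le; [apply hnorm_gt0; auto |].
        apply (proj1 C1). exists x. auto. }
    set (z := hsub y w).
    assert (Oz : ortho W z) by exact Ow.
    destruct (proj_spec S hS z) as [SPz OPz].
    set (Pz := proj S z) in *.
    assert (Lz : c2 * hnorm z <= hnorm Pz).
    { destruct (classic (z = hzero)) as [Z|Z].
      - rewrite Z, hnorm_zero. pose proof (hnorm_pos Pz). lra.
      - apply ratio_le; [apply hnorm_gt0; auto |].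
        apply (proj1 C2). exists z. auto. }
    pose proof (pyth z Pz (OPz _ SPz)) as P1.
    pose proof (pyth y w (Ow _ Ww)) as P2. fold z in P2.
    assert (Zy : hinner z z = hinner (hsub z Pz) y).
    { pose proof (Oz _ Ww) as E1. pose proof (Oy _ SPz) as E2. rewrite hinner_sym in E2.
      assert (hinner z z = hinner z y - hinner z w) as ->.
      { unfold z at 2. expr. ring. }
      revert E2. expl. lra. }
    pose proof (CS_sq (hsub z Pz) y) as CS. rewrite <- Zy in CS.
    pose proof (hnorm_pos z). pose proof (hnorm_pos Pz).
    assert (PP : c2 * c2 * hinner z z <= hinner Pz Pz).
    { rewrite <- !hnorm_sq. assert (Q0 : 0 <= c2 * hnorm z) by (apply Rmult_le_pos; lra). pose proof (Rmult_le_compat _ _ _ _ Q0 Q0 Lz Lz). lra. }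
    pose proof (hinner_pos H z). pose proof (hinner_pos H y). pose proof (hinner_pos H w).
    pose proof (hinner_pos H (hsub z Pz)). pose proof (hinner_pos H Pz).
    set (Zv := hinner z z) in *. set (Yv := hinner y y) in *. set (Wv := hinner w w) in *.
    set (Qv := hinner (hsub z Pz) (hsub z Pz)) in *. set (PPv := hinner Pz Pz) in *.
    assert (ZY : Zv <= (1 - c2 * c2) * Yv).
    { destruct (Req_dec Zv 0) as [E|E].
      - rewrite E. apply Rmult_le_pos; nra.
      - assert (Zv * Zv <= (1 - c2 * c2) * Yv * Zv) by nra.
        apply (Rmult_le_reg_r Zv); lra. }
    assert (WY : c2 * c2 * Yv <= Wv) by lra.
    assert (L2 : c2 * hnorm y <= hnorm w).
    { assert ((c2 * hnorm y) * (c2 * hnorm y) <= hnorm w * hnorm w).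
      { replace ((c2 * hnorm y) * (c2 * hnorm y)) with (c2*c2*(hnorm y * hnorm y)) by ring. rewrite !hnorm_sq. fold Yv Wv. lra. }
      nra. }
    assert (c1 * c2 * hnorm x <= hnorm w) by nra.
    nra.
  -
    pose proof (sin_spec A S hfoS nA) as S1.
    pose proof (lub_ge0 A _ hfoS _ nA S1) as S1b.
    pose proof (sin_spec W S hfoS nW) as S2.
    pose proof (lub_ge0 W _ hfoS _ nW S2) as S2b.
    set (s1 := sin_ang A S) in *. set (s2 := sin_ang W S) in *.
    assert (B1 : hnorm y <= s1 * hnorm x).
    { destruct (classic (x = hzero)) as [Z|Z].
      - assert (hnorm x = 0) by (rewrite Z; apply hnorm_zero). nra.
      - rewrite <- Hy. apply ratio_ge; [apply hnorm_gt0; auto |].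
        apply (proj1 S1). exists x. auto. }
    assert (B2 : hnorm w <= s2 * hnorm y).
    { destruct (classic (w = hzero)) as [Z|Z].
      - rewrite Z, hnorm_zero. nra.
      - pose proof (hnorm_gt0 w Z).
        assert (Rw : hnorm (hsub w (proj S w)) <= s2 * hnorm w).
        { rewrite <- proj_ortho by auto. apply ratio_ge; auto. apply (proj1 S2). exists w. auto. }
        destruct (proj_spec S hS w) as [SPw _].
        pose proof (Oy _ SPw) as E2. rewrite hinner_sym in E2.
        pose proof (Ow _ Ww) as E1.
        assert (hinner w w = hinner (hsub w (proj S w)) y).
        { revert E1 E2. expl. rewrite (hinner_sym H y w). lra. }
        pose proof (CS_abs (hsub w (proj S w)) y).
        pose proof (Rle_abs (hinner (hsub w (proj S w)) y)).
        pose proof (hnorm_sq w).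
        pose proof (hnorm_pos (hsub w (proj S w))).
        assert (hnorm w * hnorm w <= s2 * hnorm w * hnorm y) by nra.
        apply (Rmult_le_reg_r (hnorm w)); nra. }
    assert (s2 * hnorm y <= s2 * (s1 * hnorm x)) by (apply Rmult_le_compat_l; lra).
    assert (Fw : hnorm w <= s1 * s2 * hnorm x) by lra.
    apply (Rmult_le_compat_l (1 - lam)) in Fw; [|lra]. lra.
Qed.
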